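(* (Unconditional stability, 2D multiplicative kernel.) Let $\mathcal A^{\times}=\mathcal D_x\otimes\mathcal D_y-\mathcal G_x\otimes\mathcal G_y$ be the two-dimensional collocation matrix for the multiplicative kernel (see context), $T>0$, $N\ge1$, $\tau=T/N$, and $C_d=\frac{4(b-a)^{1-\gamma}(d-c)^{1-\gamma}}{(1-\gamma)^2}$. If vectors $\varepsilon^0,\dots,\varepsilon^N$ (indexed by $\{1,\dots,2M_x-1\}\times\{1,\dots,2M_y-1\}$) satisfy $$\Big(I+\frac{\tau}{2}\mathcal A^{\times}\Big)\varepsilon^k=\Big(I-\frac{\tau}{2}\mathcal A^{\times}\Big)\varepsilon^{k-1},\qquad k=1,\dots,N,$$ then $\|\varepsilon^k\|_\infty\le e^{TC_d}\|\varepsilon^0\|_\infty$ for all $k=0,\dots,N$, for every $M_x,M_y\ge2$ and every $\tau$.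
   Context: Fix $\gamma\in(0,1)$. For an interval $[\alpha,\beta]$ and an integer $m\ge2$ let $h=(\beta-\alpha)/m$, $x_s=\alpha+sh$ ($s\in\{0,\tfrac12,\dots,m\}$), and let $\phi_{s}$ be the piecewise quadratic Lagrange basis: for integers $0\le l\le m$, $\phi_l(x)=\frac{x-x_{l-1}}{h}\cdot\frac{2x-(x_l+x_{l-1})}{h}$ on $[x_{l-1},x_l]\cap[\alpha,\beta]$, $\phi_l(x)=\frac{x_{l+1}-x}{h}\cdot\frac{(x_{l+1}+x_l)-2x}{h}$ on $[x_l,x_{l+1}]\cap[\alpha,\beta]$, $0$ otherwise; for $l=1,\dots,m$, $\phi_{l-\frac12}(x)=\frac{4(x-x_{l-1})(x_l-x)}{h^2}$ on $[x_{l-1},x_l]$, $0$ otherwise. The associated 1D matrices are $\mathcal D=\mathrm{diag}(d_1,\dots,d_{2m-1})$ and $\mathcal G=(g_{ij})_{i,j=1}^{2m-1}$ with $d_i=\int_\alpha^\beta|x_{i/2}-y|^{-\gamma}dy$ and $g_{ij}=\int_\alpha^\beta\phi_{j/2}(y)|x_{i/2}-y|^{-\gamma}dy$. The following fact, established in earlier work, may be used: all $g_{ij}>0$ and $\mathcal D-\mathcal G$ is strictly diagonally dominant by rows. For $a<b$, $c<d$, $M_x,M_y\ge2$: $\mathcal D_x,\mathcal G_x$ are these matrices for $[a,b]$, $m=M_x$, and $\mathcal D_y,\mathcal G_y$ for $[c,d]$, $m=M_y$, and $\mathcal A^{\times}=\mathcal D_x\otimes\mathcal D_y-\mathcal G_x\otimes\mathcal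 G_y$ (the collocation matrix of $u\mapsto\int_\Omega\frac{u(x,y)-u(\bar x,\bar y)}{|x-\bar x|^\gamma|y-\bar y|^\gamma}d\bar xd\bar y$, $\Omega=(a,b)\times(c,d)$). $\|v\|_\infty$ is the maximum absolute entry. *)

(* Defs.v *)
From Stdlib Require Import Reals Lra.
Open Scope R_scope.

Fixpoint sum1 (f : nat -> R) (n : nat) : R :=
  match n with O => 0 | S n' => sum1 f n' + f (S n') end.

(* max_{j=1}^{n} f j  (0 for n = 0; only used with n >= 1 and f >= 0) *)
Fixpoint max1 (f : nat -> R) (n : nat) : R :=
  match n with O => 0 | S O => f 1%nat | S n' => Rmax (max1 f n') (f (S n')) end.

Definition ker (gamma x y : R) : R := Rpower (Rabs (x - y)) (- gamma).

(* Improper (at the point s in [lo,hi]) integral of f over [lo,hi]: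
   I = lim_{e -> 0+} ( int_lo^{max lo (s-e)} f + int_{min hi (s+e)}^hi f ). *)
Definition sing_integral (f : R -> R) (lo hi s I : R) : Prop :=
  forall eps, eps > 0 -> exists delta, delta > 0 /\
    forall e, 0 < e < delta ->
      exists (p1 : Riemann_integrable f lo (Rmax lo (s - e)))
             (p2 : Riemann_integrable f (Rmin hi (s + e)) hi),
        Rabs (RiemannInt p1 + RiemannInt p2 - I) < eps.

(* mesh on [al,be] with m cells; node x_s for s = j/2 *)
Definition hstep (al be : R) (m : nat) : R := (be - al) / INR m.
Definition node (al be : R) (m : nat) (s : R) : R := al + s * hstep al be m.
Definition xhalf (al be : R) (m j : nat) : R := node al be m (INR j / 2).

Definition inI (lo hi x : R) : Prop := lo <= x <= hi.

Definition phi_node (al be : R) (m l : nat) (x : R) : R :=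
  let h := hstep al be m in
  let xl := node al be m (INR l) in
  let xlm := node al be m (INR l - 1) in
  let xlp := node al be m (INR l + 1) in
  if Rle_dec al x then if Rle_dec x be then
    if Rle_dec xlm x then if Rle_dec x xl then
      ((x - xlm) / h) * ((2 * x - (xl + xlm)) / h)
    else if Rle_dec x xlp then ((xlp - x) / h) * (((xlp + xl) - 2 * x) / h) else 0
    else 0
  else 0 else 0.

(* midpoint basis function phi_{l-1/2}, l in 1..m *)
Definition phi_mid (al be : R) (m l : nat) (x : R) : R :=
  let h := hstep al be m in
  let xl := node al be m (INR l) in
  let xlm := node al be m (INR l - 1) in
  if Rle_dec xlm x then if Rle_dec x xl then 4 * (x - xlm) * (xl - x) / (h * h) else 0 else 0.

Definition phi_half (al be : R) (m j : nat) (x : R) : R :=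
  if Nat.even j then phi_node al be m (Nat.div2 j) x
  else phi_mid al be m (Nat.div2 (S j)) x.

Definition is_Dvec (gamma al be : R) (m : nat) (d : nat -> R) : Prop :=
  forall i, (1 <= i <= 2 * m - 1)%nat ->
    sing_integral (fun y => ker gamma (xhalf al be m i) y) al be (xhalf al be m i) (d i).

Definition is_Gmat (gamma al be : R) (m : nat) (g : nat -> nat -> R) : Prop :=
  forall i j, (1 <= i <= 2 * m - 1)%nat -> (1 <= j <= 2 * m - 1)%nat ->
    sing_integral (fun y => phi_half al be m j y * ker gamma (xhalf al be m i) y)
      al be (xhalf al be m i) (g i j).

(* Action of A^x = D_x (x) D_y - G_x (x) G_y on a grid vector v (i,p) *)
Definition Amul (Mx My : nat) (dx dy : nat -> R) (gx gy : nat -> nat -> R)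
    (v : nat -> nat -> R) (i p : nat) : R :=
  dx i * dy p * v i p
  - sum1 (fun j => sum1 (fun q => gx i j * gy p q * v j q) (2 * My - 1)) (2 * Mx - 1).

Definition normInf (Mx My : nat) (v : nat -> nat -> R) : R :=
  max1 (fun i => max1 (fun p => Rabs (v i p)) (2 * My - 1)) (2 * Mx - 1).

(* Main.v *)
Require Import Defs.
From Stdlib Require Import Reals Lra Lia.
From Coquelicot Require Import Coquelicot.
Open Scope R_scope.

Lemma der_pow_left (g s y : R) : y < s ->
  is_derive (fun y => Rpower (s - y) (1-g)) y ((-1) * ((1-g) * Rpower (s - y) (1-g-1))).
Proof.
  intro H.
  apply (is_derive_comp (fun z => Rpower z (1-g)) (fun y => s - y)).
  - apply is_derive_Reals. apply derivable_pt_lim_power. lra.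
  - auto_derive; auto; ring.
Qed.
Lemma der_pow_right (g s y : R) : s < y ->
  is_derive (fun y => Rpower (y - s) (1-g)) y (1 * ((1-g) * Rpower (y - s) (1-g-1))).
Proof.
  intro H.
  apply (is_derive_comp (fun z => Rpower z (1-g)) (fun y => y - s)).
  - apply is_derive_Reals. apply derivable_pt_lim_power. lra.
  - auto_derive; auto; ring.
Qed.
Lemma der_ker_left (g s y : R) : y < s ->
  is_derive (fun y => Rpower (s - y) (-g)) y ((-1) * ((-g) * Rpower (s - y) (-g-1))).
Proof.
  intro H.
  apply (is_derive_comp (fun z => Rpower z (-g)) (fun y => s - y)).
  - apply is_derive_Reals. apply derivable_pt_lim_power. lra.
  - auto_derive; auto; ring.
Qed.
Lemma der_ker_right (g s y : R) : s < y ->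
  is_derive (fun y => Rpower (y - s) (-g)) y (1 * ((-g) * Rpower (y - s) (-g-1))).
Proof.
  intro H.
  apply (is_derive_comp (fun z => Rpower z (-g)) (fun y => y - s)).
  - apply is_derive_Reals. apply derivable_pt_lim_power. lra.
  - auto_derive; auto; ring.
Qed.

Lemma int_left (g s lo u : R) : 0 < g < 1 -> lo <= u -> u < s ->
  forall pr : Riemann_integrable (fun y => ker g s y) lo u,
  RiemannInt pr <= Rpower (s - lo) (1-g) / (1-g).
Proof.
  intros Hg Hlu Hus pr.
  rewrite <- RInt_Reals.
  assert (HI : is_RInt (fun y => Rpower (s - y) (-g)) lo u
     (minus ((fun y => - Rpower (s - y) (1-g) / (1-g)) u) ((fun y => - Rpower (s - y) (1-g) / (1-g)) lo))).
  { apply (is_RInt_derive (fun y => - Rpower (s - y) (1-g) / (1-g))).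
    - intros x Hx. rewrite Rmin_left in Hx by lra. rewrite Rmax_right in Hx by lra.
      apply (is_derive_ext (fun t => (- / (1-g)) * Rpower (s - t) (1-g))).
      { intro t. simpl. unfold Rdiv. ring. }
      replace (Rpower (s - x) (- g)) with ((- / (1-g)) * ((-1) * ((1-g) * Rpower (s - x) (1-g-1)))).
      2:{ replace (1-g-1) with (-g) by ring. field. lra. }
      apply is_derive_scal.
      apply der_pow_left. lra.
    - intros x Hx. rewrite Rmin_left in Hx by lra. rewrite Rmax_right in Hx by lra.
      apply (ex_derive_continuous (fun y => Rpower (s - y) (-g))).
      eexists. apply der_ker_left. lra. }
  apply is_RInt_ext with (g := fun y => ker g s y) in HI.
  2:{ intros x Hx. rewrite Rmin_left in Hx by lra. rewrite Rmax_right in Hx by lra.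
      unfold ker. rewrite Rabs_right by lra. reflexivity. }
  rewrite (is_RInt_unique _ _ _ _ HI).
  unfold minus, plus, opp; simpl.
  assert (0 < Rpower (s - u) (1-g)) by apply exp_pos.
  assert (0 < 1 - g) by lra.
  unfold Rdiv. 
  assert (0 < / (1-g)) by (apply Rinv_0_lt_compat; lra).
  nra.
Qed.

Lemma int_right (g s u hi : R) : 0 < g < 1 -> s < u -> u <= hi ->
  forall pr : Riemann_integrable (fun y => ker g s y) u hi,
  RiemannInt pr <= Rpower (hi - s) (1-g) / (1-g).
Proof.
  intros Hg Hsu Huh pr.
  rewrite <- RInt_Reals.
  assert (HI : is_RInt (fun y => Rpower (y - s) (-g)) u hi
     (minus ((fun y => Rpower (y - s) (1-g) / (1-g)) hi) ((fun y => Rpower (y - s) (1-g) / (1-g)) u))).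
  { apply (is_RInt_derive (fun y => Rpower (y - s) (1-g) / (1-g))).
    - intros x Hx. rewrite Rmin_left in Hx by lra. rewrite Rmax_right in Hx by lra.
      apply (is_derive_ext (fun t => (/ (1-g)) * Rpower (t - s) (1-g))).
      { intro t. simpl. unfold Rdiv. ring. }
      replace (Rpower (x - s) (- g)) with ((/ (1-g)) * (1 * ((1-g) * Rpower (x - s) (1-g-1)))).
      2:{ replace (1-g-1) with (-g) by ring. field. lra. }
      apply is_derive_scal.
      apply der_pow_right. lra.
    - intros x Hx. rewrite Rmin_left in Hx by lra. rewrite Rmax_right in Hx by lra.
      apply (ex_derive_continuous (fun y => Rpower (y - s) (-g))).
      eexists. apply der_ker_right. lra. }
  apply is_RInt_ext with (g := fun y => ker g s y) in HI.
  2:{ intros x Hx. rewrite Rmin_left in Hx by lra. rewrite Rmax_right in Hx by lra.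
      unfold ker. rewrite Rabs_left by lra. f_equal. ring. }
  rewrite (is_RInt_unique _ _ _ _ HI).
  unfold minus, plus, opp; simpl.
  assert (0 < Rpower (u - s) (1-g)) by apply exp_pos.
  assert (0 < 1 - g) by lra.
  unfold Rdiv.
  assert (0 < / (1-g)) by (apply Rinv_0_lt_compat; lra).
  nra.
Qed.

Lemma dbound (g lo hi s I : R) : 0 < g < 1 -> lo < s < hi ->
  sing_integral (fun y => ker g s y) lo hi s I ->
  I <= 2 * Rpower (hi - lo) (1-g) / (1-g).
Proof.
  intros Hg Hs HI.
  apply le_epsilon. intros eps Heps.
  destruct (HI eps Heps) as [delta [Hd Hd2]].
  destruct (Hd2 (delta/2)) as [p1 [p2 Hp]]. lra.
  pose proof (int_left g s lo (Rmax lo (s - delta/2)) Hg (Rmax_l _ _)) as L.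
  assert (Rmax lo (s - delta/2) < s) by (apply Rmax_lub_lt; lra).
  specialize (L H p1).
  pose proof (int_right g s (Rmin hi (s + delta/2)) hi Hg) as Rr.
  assert (s < Rmin hi (s + delta/2)) by (apply Rmin_glb_lt; lra).
  specialize (Rr H0 (Rmin_l _ _) p2).
  assert (Rpower (s - lo) (1-g) <= Rpower (hi - lo) (1-g)) by (apply Rle_Rpower_l; lra).
  assert (Rpower (hi - s) (1-g) <= Rpower (hi - lo) (1-g)) by (apply Rle_Rpower_l; lra).
  assert (0 < / (1-g)) by (apply Rinv_0_lt_compat; lra).
  unfold Rdiv in *.
  assert (Rpower (s - lo) (1-g) * / (1-g) <= Rpower (hi - lo) (1-g) * / (1-g)) by (apply Rmult_le_compat_r; lra).
  assert (Rpower (hi - s) (1-g) * / (1-g) <= Rpower (hi - lo) (1-g) * / (1-g)) by (apply Rmult_le_compat_r; lra).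
  apply Rabs_def2 in Hp. lra.
Qed.

Lemma gbound (g lo hi s I G : R) (phi : R -> R) :
  sing_integral (fun y => ker g s y) lo hi s I ->
  sing_integral (fun y => phi y * ker g s y) lo hi s G ->
  (forall y, phi y <= 1) -> G <= I.
Proof.
  intros HI HG Hphi.
  apply le_epsilon. intros eps Heps.
  destruct (HI (eps/2)) as [d1 [Hd1 H1]]. lra.
  destruct (HG (eps/2)) as [d2 [Hd2 H2]]. lra.
  set (e := Rmin d1 d2 / 2).
  assert (0 < Rmin d1 d2) by (apply Rmin_glb_lt; lra).
  assert (Rmin d1 d2 <= d1) by apply Rmin_l.
  assert (Rmin d1 d2 <= d2) by apply Rmin_r.
  destruct (H1 e) as [p1 [p2 Hp]]. unfold e; lra.
  destruct (H2 e) as [q1 [q2 Hq]]. unfold e; lra.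
  assert (Hk : forall y, phi y * ker g s y <= ker g s y).
  { intro y. specialize (Hphi y). assert (0 < ker g s y) by apply exp_pos. nra. }
  assert (RiemannInt q1 <= RiemannInt p1).
  { apply RiemannInt_P19. apply Rmax_l. intros; apply Hk. }
  assert (RiemannInt q2 <= RiemannInt p2).
  { apply RiemannInt_P19. apply Rmin_l. intros; apply Hk. }
  apply Rabs_def2 in Hp. apply Rabs_def2 in Hq. lra.
Qed.

Lemma phi_le1 al be m j x : al < be -> (1 <= m)%nat -> phi_half al be m j x <= 1.
Proof.
  intros Hab Hm.
  assert (Hh : 0 < hstep al be m).
  { unfold hstep. apply Rdiv_lt_0_compat. lra. apply lt_0_INR. lia. }
  unfold phi_half.
  destruct (Nat.even j).
  - unfold phi_node. cbv zeta.
    set (h := hstep al be m) in *.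
    set (l := INR (Nat.div2 j)).
    assert (E1 : node al be m l - node al be m (l - 1) = h) by (unfold node; fold h; ring).
    assert (E2 : node al be m (l + 1) - node al be m l = h) by (unfold node; fold h; ring).
    set (xl := node al be m l) in *.
    set (xlm := node al be m (l - 1)) in *.
    set (xlp := node al be m (l + 1)) in *.
    clearbody xl xlm xlp h.
    assert (xlp = xl + h) by lra. subst xlp.
    assert (xl = xlm + h) by lra. subst xl.
    repeat destruct Rle_dec; try lra.
    + set (t := (x - xlm) / h).
      assert (Ht : 0 <= t <= 1).
      { unfold t; split. apply Rdiv_le_0_compat; lra.
        apply (Rmult_le_reg_r h); [lra|]. unfold Rdiv. rewrite Rmult_assoc, Rinv_l; lra. }
      replace ((2 * x - (xlm + h + xlm)) / h) with (2 * t - 1) by (unfold t; field; lra).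
      nra.
    + set (t := (xlm + h + h - x) / h).
      assert (Ht : 0 <= t <= 1).
      { unfold t; split. apply Rdiv_le_0_compat; lra.
        apply (Rmult_le_reg_r h); [lra|]. unfold Rdiv. rewrite Rmult_assoc, Rinv_l; lra. }
      replace ((xlm + h + h + (xlm + h) - 2 * x) / h) with (2 * t - 1) by (unfold t; field; lra).
      nra.
  - unfold phi_mid. cbv zeta.
    set (h := hstep al be m) in *.
    set (l := INR (Nat.div2 (S j))).
    assert (E1 : node al be m l - node al be m (l - 1) = h) by (unfold node; fold h; ring).
    set (xl := node al be m l) in *.
    set (xlm := node al be m (l - 1)) in *.
    clearbody xl xlm h.
    assert (xl = xlm + h) by lra. subst xl.
    repeat destruct Rle_dec; try lra.
    apply (Rmult_le_reg_r (h*h)); [nra|]. unfold Rdiv. rewrite Rmult_assoc, Rinv_l by nra.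
    pose proof (pow2_ge_0 (h - 2*(x-xlm))). nra.
Qed.

Lemma sum1_ext f g n : (forall j, (1 <= j <= n)%nat -> f j = g j) -> sum1 f n = sum1 g n.
Proof.
  induction n; simpl; intros H; auto.
  rewrite IHn by (intros; apply H; lia). rewrite H by lia. reflexivity.
Qed.

Lemma sum1_abs_le f g n : (forall j, (1 <= j <= n)%nat -> Rabs (f j) <= g j) ->
  Rabs (sum1 f n) <= sum1 g n.
Proof.
  induction n; simpl; intros H.
  - rewrite Rabs_R0; lra.
  - eapply Rle_trans. apply Rabs_triang.
    apply Rplus_le_compat. apply IHn; intros; apply H; lia. apply H; lia.
Qed.

Lemma sum1_mult_l c f n : sum1 (fun q => c * f q) n = c * sum1 f n.
Proof. induction n; simpl. ring. rewrite IHn. ring. Qed.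

Lemma sum1_pos f n : (1 <= n)%nat -> (forall j, (1 <= j <= n)%nat -> 0 < f j) -> 0 < sum1 f n.
Proof.
  induction n; intros Hn H. lia.
  simpl. destruct n.
  - simpl. specialize (H 1%nat ltac:(lia)). lra.
  - assert (0 < sum1 f (S n)) by (apply IHn; [lia | intros; apply H; lia]).
    specialize (H (S (S n))). assert (0 < f (S (S n))) by (apply H; lia). lra.
Qed.

Lemma sum1_diag f n i : (1 <= i <= n)%nat ->
  sum1 f n = f i + sum1 (fun j => if Nat.eq_dec j i then 0 else f j) n.
Proof.
  induction n; intros Hi. lia.
  cbn [sum1]. destruct (Nat.eq_dec (S n) i).
  - subst. rewrite (sum1_ext (fun j => if Nat.eq_dec j (S n) then 0 else f j) f).
    destruct (Nat.eq_dec (S n) (S n)); [ring|lia]. intros j Hj. destruct (Nat.eq_dec j (S n)); [lia|auto].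
  - rewrite IHn by lia. ring.
Qed.

Lemma max1_ge f n j : (1 <= j <= n)%nat -> f j <= max1 f n.
Proof.
  induction n; intros Hj. lia.
  destruct (Nat.eq_dec j (S n)).
  - subst. destruct n. simpl. lra. simpl max1 at 1. 
    change (max1 f (S (S n))) with (Rmax (max1 f (S n)) (f (S (S n)))). apply Rmax_r.
  - destruct n. lia.
    change (max1 f (S (S n))) with (Rmax (max1 f (S n)) (f (S (S n)))).
    eapply Rle_trans. apply IHn; lia. apply Rmax_l.
Qed.

Lemma max1_attain f n : (1 <= n)%nat -> exists j, (1 <= j <= n)%nat /\ max1 f n = f j.
Proof.
  induction n; intros Hn. lia.
  destruct n. exists 1%nat. split. lia. reflexivity.
  change (max1 f (S (S n))) with (Rmax (max1 f (S n)) (f (S (S n)))).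
  destruct (IHn ltac:(lia)) as [j [Hj Ej]].
  unfold Rmax. destruct Rle_dec.
  - exists (S (S n)). split. lia. reflexivity.
  - exists j. split. lia. auto.
Qed.

Lemma normInf_ge Mx My v i p : (1 <= i <= 2 * Mx - 1)%nat -> (1 <= p <= 2 * My - 1)%nat ->
  Rabs (v i p) <= normInf Mx My v.
Proof.
  intros Hi Hp. unfold normInf.
  eapply Rle_trans. 2: apply (max1_ge _ _ i Hi).
  apply (max1_ge (fun p => Rabs (v i p)) _ p Hp).
Qed.

Lemma normInf_attain Mx My v : (1 <= Mx)%nat -> (1 <= My)%nat ->
  exists i p, (1 <= i <= 2 * Mx - 1)%nat /\ (1 <= p <= 2 * My - 1)%nat /\
  normInf Mx My v = Rabs (v i p).
Proof.
  intros H1 H2. unfold normInf.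
  destruct (max1_attain (fun i => max1 (fun p => Rabs (v i p)) (2 * My - 1)) (2 * Mx - 1)) as [i [Hi Ei]]. lia.
  destruct (max1_attain (fun p => Rabs (v i p)) (2 * My - 1)) as [p [Hp Ep]]. lia.
  exists i, p. split; auto. split; auto. rewrite Ei. exact Ep.
Qed.

Lemma normInf_nonneg Mx My v : (1 <= Mx)%nat -> (1 <= My)%nat -> 0 <= normInf Mx My v.
Proof.
  intros. eapply Rle_trans. apply Rabs_pos. apply (normInf_ge Mx My v 1 1); lia.
Qed.

Lemma Qbound nx ny (gxi gyp : nat -> R) (v : nat -> nat -> R) M :
  (forall j, (1 <= j <= nx)%nat -> 0 < gxi j) -> (forall q, (1 <= q <= ny)%nat -> 0 < gyp q) ->
  (forall j q, (1 <= j <= nx)%nat -> (1 <= q <= ny)%nat -> Rabs (v j q) <= M) ->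
  Rabs (sum1 (fun j => sum1 (fun q => gxi j * gyp q * v j q) ny) nx) <= sum1 gxi nx * sum1 gyp ny * M.
Proof.
  intros Hx Hy Hv.
  eapply Rle_trans.
  apply (sum1_abs_le _ (fun j => gxi j * (sum1 gyp ny * M))).
  - intros j Hj.
    replace (gxi j * (sum1 gyp ny * M)) with (sum1 (fun q => gxi j * (gyp q * M)) ny).
    2:{ rewrite sum1_mult_l. f_equal. rewrite (sum1_ext _ (fun q => M * gyp q)) by (intros; ring).
        rewrite sum1_mult_l. ring. }
    apply sum1_abs_le. intros q Hq.
    specialize (Hx j Hj). specialize (Hy q Hq). specialize (Hv j q Hj Hq).
    rewrite !Rabs_mult. rewrite (Rabs_right (gxi j)) by lra. rewrite (Rabs_right (gyp q)) by lra.
    rewrite Rmult_assoc. apply Rmult_le_compat_l. lra. apply Rmult_le_compat_l; lra.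
  - rewrite (sum1_ext _ (fun j => (sum1 gyp ny * M) * gxi j)) by (intros; ring).
    rewrite sum1_mult_l. lra.
Qed.

Lemma xhalf_in lo hi m i : lo < hi -> (1 <= m)%nat -> (1 <= i <= 2 * m - 1)%nat ->
  lo < xhalf lo hi m i < hi.
Proof.
  intros Hlh Hm Hi. unfold xhalf, node, hstep.
  assert (H1 : 1 <= INR i) by (apply (le_INR 1); lia).
  assert (H2 : INR i + 1 <= 2 * INR m).
  { replace (INR i + 1) with (INR (S i)) by (rewrite S_INR; ring).
    replace (2 * INR m) with (INR (2 * m)) by (rewrite mult_INR; simpl; ring).
    apply le_INR. lia. }
  assert (Hm' : 0 < INR m) by (apply lt_0_INR; lia).
  replace (lo + INR i / 2 * ((hi - lo) / INR m)) with (lo + (hi - lo) * (INR i / (2 * INR m))) by (field; lra).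
  assert (0 < INR i / (2 * INR m) < 1).
  { split. apply Rdiv_lt_0_compat; lra.
    apply (Rmult_lt_reg_r (2 * INR m)). lra. unfold Rdiv. rewrite Rmult_assoc, Rinv_l; lra. }
  nra.
Qed.

Lemma oneD g lo hi m dv gm i : 0 < g < 1 -> lo < hi -> (2 <= m)%nat ->
  is_Dvec g lo hi m dv -> is_Gmat g lo hi m gm ->
  (forall i j, (1 <= i <= 2 * m - 1)%nat -> (1 <= j <= 2 * m - 1)%nat -> 0 < gm i j) ->
  (forall i, (1 <= i <= 2 * m - 1)%nat ->
     Rabs (dv i - gm i i) > sum1 (fun j => if Nat.eq_dec j i then 0 else Rabs (gm i j)) (2 * m - 1)) ->
  (1 <= i <= 2 * m - 1)%nat ->
  0 < sum1 (fun j => gm i j) (2 * m - 1) /\ sum1 (fun j => gm i j) (2 * m - 1) < dv i /\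
  dv i <= 2 * Rpower (hi - lo) (1 - g) / (1 - g).
Proof.
  intros Hg Hlh Hm HD HG Hpos Hdom Hi.
  pose proof (xhalf_in lo hi m i Hlh ltac:(lia) Hi) as Hs.
  pose proof (HD i Hi) as Di. pose proof (HG i i Hi Hi) as Gi.
  assert (Hub := dbound g lo hi _ _ Hg Hs Di).
  assert (Hgd : gm i i <= dv i).
  { apply (gbound g lo hi (xhalf lo hi m i) _ _ (phi_half lo hi m i) Di Gi).
    intro y. apply phi_le1; lra || lia. }
  pose proof (Hdom i Hi) as Hdi.
  rewrite (sum1_ext _ (fun j => if Nat.eq_dec j i then 0 else gm i j)) in Hdi.
  2:{ intros j Hj. destruct (Nat.eq_dec j i). auto. apply Rabs_right. left; apply Hpos; auto. }
  rewrite Rabs_right in Hdi by lra.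
  pose proof (sum1_diag (fun j => gm i j) _ i Hi) as Hsd.
  assert (0 < sum1 (fun j => gm i j) (2 * m - 1)).
  { apply sum1_pos. lia. intros; apply Hpos; auto. }
  split. auto. split; [lra | exact Hub].
Qed.

Lemma pow_exp x k : 0 <= x -> (1 + x) ^ k <= exp (INR k * x).
Proof.
  intros Hx. induction k.
  - simpl. rewrite Rmult_0_l, exp_0. lra.
  - rewrite S_INR. replace ((INR k + 1) * x) with (x + INR k * x) by ring.
    rewrite exp_plus. simpl.
    assert (1 + x <= exp x).
    { destruct (Req_dec x 0). subst. rewrite exp_0. lra. left. apply exp_ineq1. auto. }
    apply Rmult_le_compat; try lra. apply pow_le; lra.
Qed.

Theorem theorem3p10 (gamma a b c d T : R) (Mx My N : nat)
  (dx dy : nat -> R) (gx gy : nat -> nat -> R) (eps : nat -> nat -> nat -> R) :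
  0 < gamma < 1 -> a < b -> c < d -> (2 <= Mx)%nat -> (2 <= My)%nat ->
  0 < T -> (1 <= N)%nat ->
  is_Dvec gamma a b Mx dx -> is_Gmat gamma a b Mx gx ->
  is_Dvec gamma c d My dy -> is_Gmat gamma c d My gy ->
  (* fact from earlier work (see context): g_ij > 0 and D - G strictly
     diagonally dominant by rows, for both 1D matrices *)
  (forall i j, (1 <= i <= 2 * Mx - 1)%nat -> (1 <= j <= 2 * Mx - 1)%nat -> 0 < gx i j) ->
  (forall i, (1 <= i <= 2 * Mx - 1)%nat ->
     Rabs (dx i - gx i i) > sum1 (fun j => if Nat.eq_dec j i then 0 else Rabs (gx i j)) (2 * Mx - 1)) ->
  (forall i j, (1 <= i <= 2 * My - 1)%nat -> (1 <= j <= 2 * My - 1)%nat -> 0 < gy i j) ->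
  (forall i, (1 <= i <= 2 * My - 1)%nat ->
     Rabs (dy i - gy i i) > sum1 (fun j => if Nat.eq_dec j i then 0 else Rabs (gy i j)) (2 * My - 1)) ->
  let tau := T / INR N in
  let Cd := 4 * Rpower (b - a) (1 - gamma) * Rpower (d - c) (1 - gamma) / ((1 - gamma) ^ 2) in
  (forall k i p, (1 <= k <= N)%nat -> (1 <= i <= 2 * Mx - 1)%nat -> (1 <= p <= 2 * My - 1)%nat ->
     eps k i p + tau / 2 * Amul Mx My dx dy gx gy (eps k) i p
     = eps (k - 1)%nat i p - tau / 2 * Amul Mx My dx dy gx gy (eps (k - 1)%nat) i p) ->
  forall k, (k <= N)%nat ->
    normInf Mx My (eps k) <= exp (T * Cd) * normInf Mx My (eps 0%nat).
Proof.
  intros Hg Hab Hcd HMx HMy HT HN HDx HGx HDy HGy Hgx Hdomx Hgy Hdomy tau Cd Hrec.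
  assert (HNpos : 0 < INR N) by (apply lt_0_INR; lia).
  assert (Htau : 0 < tau) by (unfold tau; apply Rdiv_lt_0_compat; lra).
  set (Bx := 2 * Rpower (b - a) (1 - gamma) / (1 - gamma)).
  set (By := 2 * Rpower (d - c) (1 - gamma) / (1 - gamma)).
  assert (HCd : Cd = Bx * By) by (unfold Cd, Bx, By; field; lra).
  assert (HBx : 0 <= Bx).
  { unfold Bx. apply Rdiv_le_0_compat. pose proof (exp_pos ((1 - gamma) * ln (b - a))).
    unfold Rpower. lra. lra. }
  assert (HCd0 : 0 <= Cd).
  { rewrite HCd. apply Rmult_le_pos; auto. unfold By. apply Rdiv_le_0_compat.
    pose proof (exp_pos ((1 - gamma) * ln (d - c))). unfold Rpower. lra. lra. }
  assert (Step : forall k, (1 <= k <= N)%nat ->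
     normInf Mx My (eps k) <= (1 + tau * Cd) * normInf Mx My (eps (k - 1)%nat)).
  { intros k Hk.
    destruct (normInf_attain Mx My (eps k) ltac:(lia) ltac:(lia)) as [i [p [Hi [Hp Ek]]]].
    destruct (oneD gamma a b Mx dx gx i Hg Hab HMx HDx HGx Hgx Hdomx Hi) as [Sx0 [Sxd dxB]].
    destruct (oneD gamma c d My dy gy p Hg Hcd HMy HDy HGy Hgy Hdomy Hp) as [Sy0 [Syd dyB]].
    fold Bx in dxB. fold By in dyB.
    set (Sx := sum1 (fun j => gx i j) (2 * Mx - 1)) in *.
    set (Sy := sum1 (fun j => gy p j) (2 * My - 1)) in *.
    set (Mk := normInf Mx My (eps k)) in *.
    set (M0 := normInf Mx My (eps (k - 1)%nat)).
    assert (HQ : forall v, Rabs (sum1 (fun j => sum1 (fun q => gx i j * gy p q * v j q) (2 * My - 1)) (2 * Mx - 1))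
                  <= Sx * Sy * normInf Mx My v).
    { intro v. apply (Qbound _ _ (fun j => gx i j) (fun q => gy p q)).
      intros; apply Hgx; auto. intros; apply Hgy; auto.
      intros; apply normInf_ge; auto. }
    pose proof (HQ (eps k)) as Q1. pose proof (HQ (eps (k - 1)%nat)) as Q0.
    fold Mk in Q1. fold M0 in Q0.
    set (Q1v := sum1 (fun j => sum1 (fun q => gx i j * gy p q * eps k j q) (2 * My - 1)) (2 * Mx - 1)) in *.
    set (Q0v := sum1 (fun j => sum1 (fun q => gx i j * gy p q * eps (k - 1)%nat j q) (2 * My - 1)) (2 * Mx - 1)) in *.
    pose proof (Hrec k i p Hk Hi Hp) as E. unfold Amul in E. fold Q1v Q0v in E.
    set (P := dx i * dy p) in *.
    set (e := eps k i p) in *. set (e' := eps (k - 1)%nat i p) in *.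
    assert (He' : Rabs e' <= M0) by (apply normInf_ge; auto).
    assert (HP : Sx * Sy <= P) by (unfold P; nra).
    assert (HPC : P <= Cd) by (rewrite HCd; unfold P; apply Rmult_le_compat; lra).
    assert (HS0 : 0 < Sx * Sy) by nra.
    assert (E2 : e * (1 + tau * P / 2) = e' * (1 - tau * P / 2) + tau / 2 * Q0v + tau / 2 * Q1v).
    { replace (dx i * dy p * e) with (P * e) in E by (unfold P; ring).
      replace (dx i * dy p * e') with (P * e') in E by (unfold P; ring). lra. }
    assert (L : Mk * (1 + tau * P / 2) = Rabs (e * (1 + tau * P / 2))).
    { rewrite Rabs_mult, Ek. rewrite (Rabs_right (1 + tau * P / 2)). reflexivity. nra. }
    assert (R1 : Rabs (e' * (1 - tau * P / 2)) <= M0 * (1 + tau * P / 2)).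
    { rewrite Rabs_mult. apply Rmult_le_compat. apply Rabs_pos. apply Rabs_pos. auto.
      apply Rabs_le. nra. }
    assert (R2 : Rabs (tau / 2 * Q0v) <= tau / 2 * (Sx * Sy * M0)).
    { rewrite Rabs_mult, Rabs_right by lra. apply Rmult_le_compat_l; lra. }
    assert (R3 : Rabs (tau / 2 * Q1v) <= tau / 2 * (Sx * Sy * Mk)).
    { rewrite Rabs_mult, Rabs_right by lra. apply Rmult_le_compat_l; lra. }
    assert (Tri : Mk * (1 + tau * P / 2) <= M0 * (1 + tau * P / 2) + tau / 2 * (Sx * Sy * M0) + tau / 2 * (Sx * Sy * Mk)).
    { rewrite L, E2. eapply Rle_trans. apply Rabs_triang. eapply Rle_trans.
      apply Rplus_le_compat_r. apply Rabs_triang. lra. }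
    assert (HMk : 0 <= Mk) by (apply normInf_nonneg; lia).
    assert (HM0 : 0 <= M0) by (apply normInf_nonneg; lia).
    assert (0 <= tau * (P - Sx * Sy) * M0) by (apply Rmult_le_pos; [apply Rmult_le_pos|]; lra).
    assert (0 <= tau * (P - Sx * Sy) * Mk) by (apply Rmult_le_pos; [apply Rmult_le_pos|]; lra).
    assert (Mk <= M0 * (1 + tau * P)) by nra.
    assert (0 <= tau * (Cd - P) * M0) by (apply Rmult_le_pos; [apply Rmult_le_pos|]; lra).
    assert (M0 * (1 + tau * P) <= (1 + tau * Cd) * M0) by nra.
    lra. }
  assert (Ind : forall k, (k <= N)%nat -> normInf Mx My (eps k) <= (1 + tau * Cd) ^ k * normInf Mx My (eps 0%nat)).
  { induction k; intros Hk.
    - simpl. lra.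
    - eapply Rle_trans. apply Step. lia. replace (S k - 1)%nat with k by lia.
      simpl. rewrite Rmult_assoc. apply Rmult_le_compat_l. nra. apply IHk. lia. }
  intros k Hk. eapply Rle_trans. apply Ind. auto.
  apply Rmult_le_compat_r. apply normInf_nonneg; lia.
  eapply Rle_trans. apply pow_exp. nra.
  assert (INR k * (tau * Cd) <= T * Cd).
  { assert (INR k <= INR N) by (apply le_INR; auto).
    assert (INR k * tau <= T).
    { unfold tau. unfold Rdiv. replace T with (INR N * (T * / INR N)) at 2 by (field; lra).
      apply Rmult_le_compat_r. left. apply Rmult_lt_0_compat. lra. apply Rinv_0_lt_compat; lra. auto. }
    nra. }
  destruct (Rle_lt_or_eq_dec _ _ H) as [Hl|Hl]. left; apply exp_increasing; auto. rewrite Hl; lra.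
Qed.
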